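(* Let $\mathbb B$ be a monad and $\mathbb C$ a comonad on a category $\mathcal A$ with a mixed distributive law $\theta\colon\mathrm{BC}\Rightarrow\mathrm{CB}$. Let $\mathrm F\dashv\mathrm U$ be the Eilenberg--Moore adjunction of $\mathbb B$, $\mathbb T$ the induced comonad on $\mathcal A^{\mathbb B}$, $\mathbb C^\theta$ the lifted comonad on $\mathcal A^{\mathbb B}$, and $\mathrm V\colon(\mathcal A^{\mathbb B})_{\mathbb C^\theta}\rightleftarrows\mathcal A^{\mathbb B}\colon\mathrm G$ the Eilenberg--Moore (forgetful--cofree) adjunction of $\mathbb C^\theta$. Let $\mathbb T^\theta$ be the comonad on $(\mathcal A^{\mathbb B})_{\mathbb C^\theta}$ given by $\mathrm T^\theta((X,\alpha),\delta)=((\mathrm B(X),\mu^{\mathbb B}_X),\theta_X\mathrm B(\delta))$, $\mathrm T^\theta(f)=\mathrm T(f)$, with comultiplication and counit those of $\mathbb T$, so that $\mathrm V\mathrm T^\theta=\mathrm T\mathrm V$, and let $\tilde\Lambda\colon\mathrm V\mathrm T^\theta\Rightarrow\mathrm T\mathrm V$ be the identity. Then the unique natural transformation $\tilde\Omega\colon\mathrm T^\theta\mathrm G\Rightarrow\mathrm G\mathrm T$ whose mate under $\mathrm V\dashv\mathrm G$ equals $\tilde\Lambda$ is given by $\tilde\Omega_{(X,\alpha)}=\theta_X$ for all $(X,\alpha)\in\mathrm{Ob}(\mathcal A^{\mathbb B})$. In particular, $\tilde\Omega$ implements a comonad extension $\mathbb T^\theta$ of $\mathbb T$ if and only if, for every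 $(X,\alpha)\in\mathrm{Ob}(\mathcal A^{\mathbb B})$, $\theta_X$ is an isomorphism from $\mathrm T^\theta(\mathrm G(X,\alpha))$ to $\mathrm G(\mathrm T(X,\alpha))$ in $(\mathcal A^{\mathbb B})_{\mathbb C^\theta}$.
   Context: A mixed distributive law $\theta$ of a monad $(\mathrm B,\mu^{\mathbb B},\eta^{\mathbb B})$ over a comonad $(\mathrm C,\Delta^{\mathbb C},\varepsilon^{\mathbb C})$ is $\theta\colon\mathrm{BC}\Rightarrow\mathrm{CB}$ with $\theta\circ\mu^{\mathbb B}\mathrm C=\mathrm C\mu^{\mathbb B}\circ\theta\mathrm B\circ\mathrm B\theta$, $\theta\circ\eta^{\mathbb B}\mathrm C=\mathrm C\eta^{\mathbb B}$, $\Delta^{\mathbb C}\mathrm B\circ\theta=\mathrm C\theta\circ\theta\mathrm C\circ\mathrm B\Delta^{\mathbb C}$, $\varepsilon^{\mathbb C}\mathrm B\circ\theta=\mathrm B\varepsilon^{\mathbb C}$. $\mathcal A^{\mathbb B}$ is the category of $\mathbb B$-algebras $(X,\alpha)$; $\mathrm F(X)=(\mathrm B(X),\mu^{\mathbb B}_X)$, $\mathrm U$ forgets, counit $\varepsilon_{(X,\alpha)}=\alpha$; $\mathbb T=(\mathrm{FU},\mathrm F\eta^{\mathbb B}\mathrm U,\varepsilon)$. $\mathbb C^\theta$: $\mathrm C^\theta(X,\alpha)=(\mathrm C(X),\mathrm C(\alpha)\theta_X)$, $\mathrm C^\theta(f)=\mathrm C(f)$, $\Delta^{\mathbb C^\theta}_{(X,\alpha)}=\Delta^{\mathbb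 C}_X$, $\varepsilon^{\mathbb C^\theta}_{(X,\alpha)}=\varepsilon^{\mathbb C}_X$. $(\mathcal A^{\mathbb B})_{\mathbb C^\theta}$ is the category of $\mathbb C^\theta$-coalgebras $(Y,\delta\colon Y\to\mathrm C^\theta(Y))$ (coassociative, counital); $\mathrm G(Y)=(\mathrm C^\theta(Y),\Delta^{\mathbb C^\theta}_Y)$, $\mathrm V$ forgets; unit $\eta'_{(Y,\delta)}=\delta$, counit $\varepsilon'=\varepsilon^{\mathbb C^\theta}$. The mate of $\tilde\Omega\colon\mathrm T^\theta\mathrm G\Rightarrow\mathrm G\mathrm T$ under $\mathrm V\dashv\mathrm G$ is $\varepsilon'\mathrm T\mathrm V\circ\mathrm V\tilde\Omega\mathrm V\circ\mathrm V\mathrm T^\theta\eta'$. ''$\tilde\Omega$ implements a comonad extension $\mathbb T^\theta$ of $\mathbb T$'' means $\tilde\Omega$ is a natural isomorphism and $(\mathrm G,\tilde\Omega)$ is a lax morphism of comonads from $\mathbb T^\theta$ to $\mathbb T$, i.e. $\mathrm G\Delta^{\mathbb T}\circ\tilde\Omega=\tilde\Omega\mathrm T\circ\mathrm T^\theta\tilde\Omega\circ\Delta^{\mathbb T^\theta}\mathrm G$ and $\mathrm G\varepsilon^{\mathbb T}\circ\tilde\Omega=\varepsilon^{\mathbb T^\theta}\mathrm G$. *)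

(* Defs.v *)
Record Category := {
  Ob :> Type;
  Hom : Ob -> Ob -> Type;
  idm : forall a, Hom a a;
  comp : forall {a b c}, Hom b c -> Hom a b -> Hom a c;
  comp_id_l : forall a b (f : Hom a b), comp (idm b) f = f;
  comp_id_r : forall a b (f : Hom a b), comp f (idm a) = f;
  comp_assoc : forall a b c d (h : Hom c d) (g : Hom b c) (f : Hom a b),
      comp h (comp g f) = comp (comp h g) f
}.

Arguments Hom {_} _ _.
Arguments idm {_} _.
Arguments comp {_ _ _ _} _ _.

Notation "g ∘ f" := (comp g f) (at level 40, left associativity).

Record Functor (A : Category) := {
  fobj :> Ob A -> Ob A;
  fmap : forall {a b : Ob A}, Hom a b -> Hom (fobj a) (fobj b);
  fmap_id : forall a, fmap (idm a) = idm (fobj a);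
  fmap_comp : forall a b c (g : Hom b c) (f : Hom a b),
      fmap (g ∘ f) = fmap g ∘ fmap f
}.
Arguments fmap {_} _ {_ _} _.

Record Monad (A : Category) := {
  mF :> Functor A;
  mu : forall a : Ob A, Hom (mF (mF a)) (mF a);
  eta : forall a : Ob A, Hom a (mF a);
  mu_nat : forall a b (f : Hom a b), fmap mF f ∘ mu a = mu b ∘ fmap mF (fmap mF f);
  eta_nat : forall a b (f : Hom a b), fmap mF f ∘ eta a = eta b ∘ f;
  mu_assoc : forall a, mu a ∘ fmap mF (mu a) = mu a ∘ mu (mF a);
  mu_eta_l : forall a, mu a ∘ eta (mF a) = idm (mF a);
  mu_eta_r : forall a, mu a ∘ fmap mF (eta a) = idm (mF a)
}.
Arguments mu {A} m a.
Arguments eta {A} m a.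

Record Comonad (A : Category) := {
  cF :> Functor A;
  delta : forall a : Ob A, Hom (cF a) (cF (cF a));
  eps : forall a : Ob A, Hom (cF a) a;
  delta_nat : forall a b (f : Hom a b),
      fmap cF (fmap cF f) ∘ delta a = delta b ∘ fmap cF f;
  eps_nat : forall a b (f : Hom a b), f ∘ eps a = eps b ∘ fmap cF f;
  delta_coassoc : forall a, fmap cF (delta a) ∘ delta a = delta (cF a) ∘ delta a;
  eps_delta_l : forall a, eps (cF a) ∘ delta a = idm (cF a);
  eps_delta_r : forall a, fmap cF (eps a) ∘ delta a = idm (cF a)
}.
Arguments delta {A} c a.
Arguments eps {A} c a.

Definition mixed_distributive_law {A : Category} (B : Monad A) (C : Comonad A)
    (theta : forall a : Ob A, Hom (B (C a)) (C (B a))) : Prop :=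
  (forall a b (f : Hom a b),
      theta b ∘ fmap B (fmap C f) = fmap C (fmap B f) ∘ theta a) /\
  (forall a, theta a ∘ mu B (C a) = fmap C (mu B a) ∘ theta (B a) ∘ fmap B (theta a)) /\
  (forall a, theta a ∘ eta B (C a) = fmap C (eta B a)) /\
  (forall a, delta C (B a) ∘ theta a = fmap C (theta a) ∘ theta (C a) ∘ fmap B (delta C a)) /\
  (forall a, eps C (B a) ∘ theta a = fmap B (eps C a)).

Section EM.
Context {A : Category} (B : Monad A) (C : Comonad A)
        (theta : forall a : Ob A, Hom (B (C a)) (C (B a))).

Definition is_alg (X : Ob A) (alpha : Hom (B X) X) : Prop :=
  alpha ∘ eta B X = idm X /\ alpha ∘ fmap B alpha = alpha ∘ mu B X.

Definition alg_hom {X : Ob A} (alpha : Hom (B X) X) {Y : Ob A} (beta : Hom (B Y) Y)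
    (f : Hom X Y) : Prop :=
  f ∘ alpha = beta ∘ fmap B f.

(* The lifted comonad C^theta: C^theta(X, alpha) = (C X, C(alpha) theta_X) *)
Definition Ctheta_act {X : Ob A} (alpha : Hom (B X) X) : Hom (B (C X)) (C X) :=
  fmap C alpha ∘ theta X.

Definition is_coalg (X : Ob A) (alpha : Hom (B X) X) (dl : Hom X (C X)) : Prop :=
  is_alg X alpha /\
  alg_hom alpha (Ctheta_act alpha) dl /\
  delta C X ∘ dl = fmap C dl ∘ dl /\
  eps C X ∘ dl = idm X.

Definition coalg_hom {X : Ob A} (alpha : Hom (B X) X) (dX : Hom X (C X))
    {Y : Ob A} (beta : Hom (B Y) Y) (dY : Hom Y (C Y)) (f : Hom X Y) : Prop :=
  alg_hom alpha beta f /\ dY ∘ f = fmap C f ∘ dX.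

(* Isomorphisms in (A^B)_{C^theta} (composition and identities are those of A) *)
Definition coalg_iso {X : Ob A} (alpha : Hom (B X) X) (dX : Hom X (C X))
    {Y : Ob A} (beta : Hom (B Y) Y) (dY : Hom Y (C Y)) (f : Hom X Y) : Prop :=
  coalg_hom alpha dX beta dY f /\
  exists g : Hom Y X, coalg_hom beta dY alpha dX g /\
                      g ∘ f = idm X /\ f ∘ g = idm Y.

(* A family Omega_{(X,alpha)} : T^theta G (X,alpha) -> G T (X,alpha), where
   T^theta G (X,alpha) = ((B C X, mu_{CX}), theta_{CX} B(Delta_X))
   G T (X,alpha)       = ((C B X, C(mu_X) theta_{BX}), Delta_{BX}). *)
Definition OmegaFamily :=
  forall (X : Ob A) (alpha : Hom (B X) X), Hom (B (C X)) (C (B X)).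

Definition TthG_act (X : Ob A) : Hom (B (B (C X))) (B (C X)) := mu B (C X).
Definition TthG_coact (X : Ob A) : Hom (B (C X)) (C (B (C X))) :=
  theta (C X) ∘ fmap B (delta C X).
Definition GT_act (X : Ob A) : Hom (B (C (B X))) (C (B X)) :=
  Ctheta_act (mu B X).
Definition GT_coact (X : Ob A) : Hom (C (B X)) (C (C (B X))) := delta C (B X).

(* Omega is a natural transformation T^theta G => G T of functors
   A^B -> (A^B)_{C^theta}; on morphisms T^theta G (f) = B(C f), G T (f) = C(B f). *)
Definition is_nat_TthG_GT (Om : OmegaFamily) : Prop :=
  (forall X alpha, is_alg X alpha ->
     coalg_hom (TthG_act X) (TthG_coact X) (GT_act X) (GT_coact X) (Om X alpha)) /\
  (forall X alpha Y beta (f : Hom X Y), is_alg X alpha -> is_alg Y beta ->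
     alg_hom alpha beta f ->
     Om Y beta ∘ fmap B (fmap C f) = fmap C (fmap B f) ∘ Om X alpha).

(* Component at ((X,alpha),delta) of the mate
   eps' T V o V Omega V o V T^theta eta' : V T^theta => T V,
   i.e. eps^C_{BX} o Omega_{(X,alpha)} o B(delta). *)
Definition mate_comp (Om : OmegaFamily) {X : Ob A} (alpha : Hom (B X) X)
    (dl : Hom X (C X)) : Hom (B X) (B X) :=
  eps C (B X) ∘ Om X alpha ∘ fmap B dl.

(* The mate equals Lambda~ = identity of V T^theta = T V *)
Definition mate_is_identity (Om : OmegaFamily) : Prop :=
  forall X alpha dl, is_coalg X alpha dl -> mate_comp Om alpha dl = idm (B X).

(* Omega implements a comonad extension T^theta of T:
   natural isomorphism + (G, Omega) lax morphism of comonads.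
   Comonad T on A^B: Delta^T_{(X,alpha)} = B(eta_X), eps^T_{(X,alpha)} = alpha;
   T^theta has the same comultiplication and counit. *)
Definition implements_comonad_extension (Om : OmegaFamily) : Prop :=
  is_nat_TthG_GT Om /\
  (forall X alpha, is_alg X alpha ->
     coalg_iso (TthG_act X) (TthG_coact X) (GT_act X) (GT_coact X) (Om X alpha)) /\
  (forall X alpha, is_alg X alpha ->
     fmap C (fmap B (eta B X)) ∘ Om X alpha =
     Om (B X) (mu B X) ∘ fmap B (Om X alpha) ∘ fmap B (eta B (C X))) /\
  (forall X alpha, is_alg X alpha ->
     fmap C alpha ∘ Om X alpha = Ctheta_act alpha).

End EM.

Definition theta_family {A : Category} (B : Monad A) (C : Comonad A)
    (theta : forall a : Ob A, Hom (B (C a)) (C (B a))) : OmegaFamily B C :=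
  fun X _ => theta X.

(* Main.v *)
Require Import Defs.

Ltac nrm := repeat rewrite comp_assoc.

Section S.
Context (A : Category) (B : Monad A) (C : Comonad A)
  (theta : forall a : Ob A, Hom (B (C a)) (C (B a)))
  (H : mixed_distributive_law B C theta).

Lemma part1 : is_nat_TthG_GT B C theta (theta_family B C theta) /\
   mate_is_identity B C theta (theta_family B C theta).
Proof.
  destruct H as (Hn & Hm & He & Hd & Hc).
  split; [split|].
  - intros X alpha _. unfold coalg_hom, alg_hom, theta_family, TthG_act, TthG_coact, GT_act, GT_coact, Ctheta_act.
    split.
    + rewrite Hm. reflexivity.
    + rewrite Hd. nrm. reflexivity.
  - intros X alpha Y beta f _ _ _. unfold theta_family. apply Hn.
  - intros X alpha dl Hco. unfold mate_comp, theta_family.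
    destruct Hco as (_ & _ & _ & Heps).
    rewrite Hc, <- fmap_comp, Heps, fmap_id. reflexivity.
Qed.
Lemma cofree_coalg X alpha : is_alg B X alpha ->
  is_coalg B C theta (C X) (Ctheta_act B C theta alpha) (delta C X).
Proof.
  destruct H as (Hn & Hm & He & Hd & Hc).
  intros [Ha1 Ha2]. unfold is_coalg, is_alg, alg_hom, Ctheta_act.
  split; [split|split; [|split]].
  - rewrite <- comp_assoc, He, <- fmap_comp, Ha1, fmap_id. reflexivity.
  - rewrite fmap_comp. 
    transitivity (fmap C alpha ∘ (theta X ∘ fmap B (fmap C alpha)) ∘ fmap B (theta X)).
    { nrm. reflexivity. }
    rewrite Hn. nrm. rewrite <- fmap_comp, Ha2, fmap_comp.
    rewrite <- !comp_assoc. f_equal. rewrite Hm. nrm. reflexivity.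
  - rewrite comp_assoc, <- delta_nat, <- comp_assoc, Hd, !fmap_comp. nrm. reflexivity.
  - symmetry; apply delta_coassoc.
  - apply eps_delta_l.
Qed.

Lemma uniq (Om : OmegaFamily B C) :
  is_nat_TthG_GT B C theta Om -> mate_is_identity B C theta Om ->
  forall (X : Ob A) (alpha : Hom (B X) X), is_alg B X alpha -> Om X alpha = theta X.
Proof.
  intros [Hco Hnat] Hmate X alpha Ha.
  pose proof H as (Hn & Hm & He & Hd & Hc).
  assert (Hcf := cofree_coalg X alpha Ha).
  assert (E1 : eps C (B X) ∘ Om X alpha = fmap B (eps C X)).
  { assert (Hh : alg_hom B (Ctheta_act B C theta alpha) alpha (eps C X)).
    { unfold alg_hom, Ctheta_act. rewrite comp_assoc, <- eps_nat, <- comp_assoc, Hc. reflexivity. }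
    assert (Hcfa : is_alg B (C X) (Ctheta_act B C theta alpha)) by (apply Hcf).
    specialize (Hnat _ _ _ _ (eps C X) Hcfa Ha Hh).
    specialize (Hmate _ _ _ Hcf). unfold mate_comp in Hmate.
    transitivity (eps C (B X) ∘ Om X alpha ∘ fmap B (fmap C (eps C X) ∘ delta C X)).
    { rewrite eps_delta_r, fmap_id, comp_id_r. reflexivity. }
    rewrite fmap_comp. nrm. rewrite <- (comp_assoc _ _ _ _ _ (eps C (B X))), Hnat.
    rewrite comp_assoc, <- eps_nat. rewrite <- !comp_assoc. rewrite (comp_assoc _ _ _ _ _ (eps C (B (C X)))), Hmate.
    apply comp_id_r. }
  destruct (Hco X alpha Ha) as [_ Hc2]. unfold GT_coact, TthG_coact in Hc2.
  transitivity (fmap C (eps C (B X)) ∘ (delta C (B X) ∘ Om X alpha)).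
  { rewrite comp_assoc, eps_delta_r, comp_id_l. reflexivity. }
  rewrite Hc2. nrm. rewrite <- fmap_comp, E1.
  rewrite <- Hn. rewrite <- comp_assoc, <- fmap_comp, eps_delta_r, fmap_id. apply comp_id_r.
Qed.
Lemma part3 : implements_comonad_extension B C theta (theta_family B C theta) <->
   forall (X : Ob A) (alpha : Hom (B X) X), is_alg B X alpha ->
     coalg_iso B C (TthG_act B C X) (TthG_coact B C theta X)
       (GT_act B C theta X) (GT_coact B C X) (theta X).
Proof.
  pose proof H as (Hn & Hm & He & Hd & Hc).
  split.
  - intros (_ & Hi & _). exact Hi.
  - intros Hi. split; [apply part1|]. split; [exact Hi|]. split.
    + intros X alpha _. unfold theta_family.
      rewrite <- comp_assoc, <- fmap_comp, He, Hn. reflexivity.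
    + intros X alpha _. reflexivity.
Qed.
End S.

Theorem lemma3p6 (A : Category) (B : Monad A) (C : Comonad A)
  (theta : forall a : Ob A, Hom (B (C a)) (C (B a))) :
  mixed_distributive_law B C theta ->
  (* theta defines a natural transformation T^theta G => G T whose mate is the identity *)
  (is_nat_TthG_GT B C theta (theta_family B C theta) /\
   mate_is_identity B C theta (theta_family B C theta)) /\
  (* and it is the unique such one *)
  (forall Om : OmegaFamily B C,
     is_nat_TthG_GT B C theta Om -> mate_is_identity B C theta Om ->
     forall (X : Ob A) (alpha : Hom (B X) X), is_alg B X alpha -> Om X alpha = theta X) /\
  (* in particular: comonad extension iff every theta_X is an iso *)
  (implements_comonad_extension B C theta (theta_family B C theta) <->
   forall (X : Ob A) (alpha : Hom (B X) X), is_alg B X alpha ->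
     coalg_iso B C (TthG_act B C X) (TthG_coact B C theta X)
       (GT_act B C theta X) (GT_coact B C X) (theta X)).
Proof.
  intros H. split; [apply part1; exact H|]. split.
  - apply uniq; exact H.
  - apply part3; exact H.
Qed.
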